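(* Let $n\ge 3$, let $P(G(n))$ be the power graph of the gyrogroup $G(n)$ (defined in the context), and write $N=2^{n-1}$. Then (1) $dds(P(G(n)))=\big((1,2^n-1),\,(1,N-1,N)^{N-1},\,(1,1,2^n-2)^{N}\big)$, where $(1,2^n-1)$ is the distance degree sequence of $e$, $(1,N-1,N)$ that of each $u\in P(n)\setminus\{e\}$, and $(1,1,2^n-2)$ that of each $u\in H(n)$; (2) $dds_D(P(G(n)))=\big((1,N,\underbrace{0,\dots,0}_{N-3},N-1),\,(1,\underbrace{0,\dots,0}_{N-2},N-1,N)^{N-1},\,(1,1,N-1,\underbrace{0,\dots,0}_{N-3},N-1)^{N}\big)$, where the first sequence is the detour distance degree sequence of $e$, the second that of each $u\in P(n)\setminus\{e\}$, and the third that of each $u\in H(n)$.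
   Context: Let $n\ge 3$ be an integer and $m=2^{n-1}$. Let $P(n)=\{0,1,\dots,m-1\}$, $H(n)=\{m,m+1,\dots,2^n-1\}$ and $G(n)=P(n)\cup H(n)$. For $i,j\in G(n)$ let $t,s,k\in P(n)$ be the residues modulo $m$ (taken in $\{0,\dots,m-1\}$) of $i+j$, $i+(\frac m2-1)j$ and $(\frac m2+1)i+(\frac m2-1)j$, respectively, and define $i\oplus j=t$ if $i,j\in P(n)$; $i\oplus j=t+m$ if $i\in P(n),j\in H(n)$; $i\oplus j=s+m$ if $i\in H(n),j\in P(n)$; $i\oplus j=k$ if $i,j\in H(n)$. Then $(G(n),\oplus)$ is a gyrogroup with identity $e=0$. Powers are defined by $a^1=a$, $a^{k+1}=a^k\oplus a$. The power graph $P(G(n))$ is the simple undirected graph with vertex set $G(n)$ in which distinct vertices $u,v$ are adjacent if and only if $u^k=v$ or $v^k=u$ for some positive integer $k$. For a vertex $u$ of a connected graph, let $deg_k(u)$ (resp. $Deg_k(u)$) be the number of vertices at distance (resp. detour distance, i.e. length of a longest path) exactly $k$ from $u$. The distance degree sequence of $u$ is $dds(u)=(deg_0(u),deg_1(u),\dots,deg_{ec(u)}(u))$, where $ec(u)$ is the eccentricity, and the detour distance degree sequence is $dds_D(u)=(Deg_0(u),\dots,Deg_{ec_D(u)}(u))$, where $ec_D(u)$ is the detour eccentricity. $dds(G)$ (resp. $dds_D(G)$) is the collection of these sequences over all vertices; an exponent $s^{r}$ indicates the sequence $s$ occurs for $r$ vertices. *)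

(* Defs.v *)
From HB Require Import structures.
From mathcomp Require Import all_boot all_order.
From mathcomp Require Import boolp.
Unset Strict Implicit. Unset Printing Implicit Defensive.

(* m = 2^(n-1); P(n) = {0..m-1}, H(n) = {m..2^n-1}, G(n) = {0..2^n-1}. *)
Definition gm (n : nat) : nat := 2 ^ n.-1.

Definition oplus (n i j : nat) : nat :=
  let m := gm n in
  let t := (i + j) %% m in
  let s := (i + (m %/ 2 - 1) * j) %% m in
  let k := ((m %/ 2 + 1) * i + (m %/ 2 - 1) * j) %% m in
  if i < m then (if j < m then t else t + m)
  else (if j < m then s + m else k).

(* Powers: a^1 = a, a^(k+1) = a^k (+) a  (only used for k >= 1). *)
Definition gpow (n a k : nat) : nat := iter k.-1 (fun x => oplus n x a) a.

Notation vtx n := ('I_(2 ^ n)).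

Definition padj (n : nat) : rel (vtx n) := fun u v =>
  (u != v) &&
  `[< exists k, 0 < k /\ (gpow n u k = v \/ gpow n v k = u) >].

Definition dist_is (n : nat) (u v : vtx n) (k : nat) : Prop :=
  (exists p : seq (vtx n), path (padj n) u p /\ last u p = v /\ size p = k) /\
  (forall p : seq (vtx n), path (padj n) u p -> last u p = v -> k <= size p).

Definition detour_is (n : nat) (u v : vtx n) (k : nat) : Prop :=
  (exists p : seq (vtx n),
      path (padj n) u p /\ uniq (u :: p) /\ last u p = v /\ size p = k) /\
  (forall p : seq (vtx n),
      path (padj n) u p -> uniq (u :: p) -> last u p = v -> size p <= k).

Definition deg (n : nat) (u : vtx n) (k : nat) : nat :=
  #|[set v : vtx n | `[< dist_is n u v k >]]|.
Definition Deg (n : nat) (u : vtx n) (k : nat) : nat :=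
  #|[set v : vtx n | `[< detour_is n u v k >]]|.

Definition ecc_is (n : nat) (u : vtx n) (e : nat) : Prop :=
  (forall v, exists k, dist_is n u v k /\ k <= e) /\ (exists v, dist_is n u v e).
Definition eccD_is (n : nat) (u : vtx n) (e : nat) : Prop :=
  (forall v, exists k, detour_is n u v k /\ k <= e) /\ (exists v, detour_is n u v e).

Definition dds_is (n : nat) (u : vtx n) (s : seq nat) : Prop :=
  exists e, ecc_is n u e /\ s = [seq deg n u k | k <- iota 0 e.+1].
Definition ddsD_is (n : nat) (u : vtx n) (s : seq nat) : Prop :=
  exists e, eccD_is n u e /\ s = [seq Deg n u k | k <- iota 0 e.+1].

(* Main.v *)
Require Import Defs.
From mathcomp Require Import all_boot.
From mathcomp Require Import boolp.
From mathcomp Require Import zify.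

Lemma clique t a b : a < 2^t -> b < 2^t ->
  exists k, 0 < k /\ ((k * a) %% 2^t = b \/ (k * b) %% 2^t = a).
Proof.
wlog: a b / gcdn a (2^t) %| gcdn b (2^t).
  move=> H ha hb.
  have := dvdn_gcdr a (2^t); case/(@dvdn_pfactor 2 _ _ isT) => x _ ex.
  have := dvdn_gcdr b (2^t); case/(@dvdn_pfactor 2 _ _ isT) => y _ ey.
  case: (leqP x y) => hxy.
    by apply: H => //; rewrite ex ey dvdn_exp2l.
  have hba : gcdn b (2^t) %| gcdn a (2^t) by rewrite ex ey dvdn_exp2l // ltnW.
  have [k [k0 hk]] := H b a hba hb ha.
  exists k; split => //; case: hk => hk; [right|left]; exact hk.
move=> hg ha hb. set m := 2^t in ha hb hg *. set g := gcdn a m in hg *.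
have m0 : 0 < m by rewrite expn_gt0.
have [s _ hs] := Bezoutl a m0.
rewrite gcdnC -/g in hs.
have gb : g %| b := dvdn_trans hg (dvdn_gcdl b m).
have key : (m.-1 * s * a) %% m = g %% m.
  apply/eqP; rewrite -(eqn_modDl (m.-1 * g)).
  have h1 : (m.-1 * g + m.-1 * s * a) %% m = 0.
    apply/eqP; rewrite -mulnA -mulnDr; exact: dvdn_mull.
  have h2 : (m.-1 * g + g) %% m = 0.
    by rewrite -{2}[g]mul1n -mulnDl addn1 prednK // modnMr.
  by rewrite h1 h2.
exists ((m.-1 * s * (b %/ g)) + m); split; first by rewrite addn_gt0 m0 orbT.
left.
rewrite mulnDl [m * a]mulnC addnC modnMDl.
rewrite (_ : m.-1 * s * (b %/ g) * a = (m.-1 * s * a) * (b %/ g)); last first.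
  by rewrite -!mulnA [b %/ g * a]mulnC.
by rewrite -modnMml key modnMml mulnC divnK // modn_small.
Qed.

Lemma gm_facts {n} : 3 <= n -> 4 <= gm n /\ gm n %/ 2 * 2 = gm n.
Proof.
move=> hn; rewrite /gm.
have -> : n.-1 = (n-3).+2 by lia.
rewrite !expnS; have := expn_gt0 2 (n-3); rewrite /= => h.
split; first lia.
by rewrite mulKn // mulnC.
Qed.

Lemma g2 {n} : 3 <= n -> 2 ^ n = gm n + gm n.
Proof. move=> hn; rewrite /gm; have {1}-> : n = n.-1.+1 by lia. by rewrite expnS mul2n addnn. Qed.

Lemma oplusPP n i j : i < gm n -> j < gm n -> oplus n i j = (i + j) %% gm n.
Proof. by move=> hi hj; rewrite /oplus hi hj. Qed.

Lemma gpowP n a k : 0 < k -> a < gm n -> gpow n a k = (k * a) %% gm n.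
Proof.
case: k => // k _ ha; rewrite /gpow /=.
have m0 : 0 < gm n by lia.
elim: k => [|k IH] /=; first by rewrite mul1n modn_small.
rewrite IH oplusPP ?ltn_pmod // modnDml.
by rewrite [k.+2 * a]mulSn addnC.
Qed.

Lemma gpowH n a k : 3 <= n -> gm n <= a < gm n + gm n -> 0 < k ->
  gpow n a k = if odd k then a else 0.
Proof.
move=> hn /andP[h1 h2]; case: k => // k _; rewrite /gpow /=.
have [m4 mh] := gm_facts hn.
suff -> : iter k (fun x => oplus n x a) a = if odd k then 0 else a.
  by case: (odd k).
elim: k => [|k IH] //=.
rewrite IH; case: (odd k) => /=.
- rewrite /oplus /=.
  have -> : 0 < gm n by lia.
  have -> : a < gm n = false by lia.
  rewrite add0n.
  have -> : a = (a - gm n) + gm n by lia.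
  rewrite modnDr modn_small; lia.
- rewrite /oplus /=.
  have -> : a < gm n = false by lia.
  rewrite -mulnDl.
  have -> : gm n %/ 2 + 1 + (gm n %/ 2 - 1) = gm n by lia.
  by rewrite modnMr.
Qed.

Lemma padjE n (hn : 3 <= n) (u v : 'I_(2 ^ n)) :
  padj n u v = (u != v) &&
    [|| val u == 0, val v == 0 | (val u < gm n) && (val v < gm n)].
Proof.
rewrite /padj.
have [->|neq] := eqVneq u v; first by [].
rewrite /=.
have [m4 mh] := gm_facts hn.
have hu : val u < gm n + gm n by rewrite -(g2 hn); exact: ltn_ord.
have hv : val v < gm n + gm n by rewrite -(g2 hn); exact: ltn_ord.
rewrite -val_eqE in neq; move: neq hu hv.
case: u => a ha0; case: v => b hb0 /= /eqP neq hu hv.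
apply/asboolP/idP.
- move=> [k [k0 H]].
  have FA : a < gm n -> gpow n a k < gm n.
    by move=> h; rewrite gpowP // ltn_pmod //; lia.
  have FB : gm n <= a -> gpow n a k = a \/ gpow n a k = 0.
    by move=> h; rewrite gpowH //; [case: (odd k); [left|right] | lia].
  have GA : b < gm n -> gpow n b k < gm n.
    by move=> h; rewrite gpowP // ltn_pmod //; lia.
  have GB : gm n <= b -> gpow n b k = b \/ gpow n b k = 0.
    by move=> h; rewrite gpowH //; [case: (odd k); [left|right] | lia].
  case: (ltnP a (gm n)) => ha; case: (ltnP b (gm n)) => hb.
  + by rewrite /= !orbT.
  + have := FA ha; have := GB hb => ? ?.
    have -> : a = 0 by lia. by [].
  + have := FB ha; have := GA hb => ? ?.
    have -> : b = 0 by lia. by rewrite orbT.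
  + have := FB ha; have := GB hb => ? ?. exfalso; lia.
- case/or3P => [/eqP a0|/eqP b0|/andP[ha hb]].
  + case: (ltnP b (gm n)) => hb.
      exists (gm n); split; first lia.
      by right; rewrite gpowP ?modnMr; lia.
    exists 2; split => //.
    by right; rewrite gpowH //; lia.
  + case: (ltnP a (gm n)) => ha.
      exists (gm n); split; first lia.
      by left; rewrite gpowP ?modnMr; lia.
    exists 2; split => //.
    by left; rewrite gpowH //; lia.
  + have [k [k0 hk]] := @clique n.-1 a b ha hb.
    by exists k; split => //; rewrite !gpowP //; exact hk.
Qed.

Lemma map_zero (f : nat -> nat) a n :
  (forall k, a <= k -> k < a + n -> f k = 0) -> map f (iota a n) = nseq n 0.
Proof.
elim: n a => //= n IH a H.
rewrite H ?IH //; try lia.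
move=> k h1 h2; apply: H; lia.
Qed.

Lemma iota_c {M} : 3 <= M -> iota 0 M = [:: 0, 1 & iota 2 (M-3)] ++ [:: M.-1].
Proof.
move=> h; have {1}-> : M = 2 + (M-3) + 1 by lia.
rewrite !iotaD /= add0n; congr (_ :: _ :: _ ++ [:: _]); lia.
Qed.

Lemma iota_P {M} : 3 <= M -> iota 0 M.+1 = 0 :: iota 1 (M-2) ++ [:: M.-1; M].
Proof.
move=> h; have {1}-> : M.+1 = 1 + (M-2) + 2 by lia.
rewrite !iotaD /= !add0n; have -> : 1 + (M - 2) = M.-1 by lia.
by have -> : M.-1.+1 = M by lia.
Qed.

Lemma iota_Q {M} : 3 <= M -> iota 0 M.+1 = [:: 0; 1; 2] ++ iota 3 (M-3) ++ [:: M].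
Proof.
move=> h; have {1}-> : M.+1 = 3 + (M-3) + 1 by lia.
rewrite !iotaD /= !add0n; congr (_ :: _ :: _ :: _ ++ [:: _]); lia.
Qed.

Section Graph.
Variables (T : finType) (P : pred T) (c : T) (e : rel T) (N : nat).
Hypothesis Pc : P c.
Hypothesis eE : forall x y, e x y = (x != y) && [|| x == c, y == c | P x && P y].
Hypothesis cardP : #|P| = N.
Hypothesis cardT : #|T| = N + N.
Hypothesis N4 : 4 <= N.
Implicit Types (u v x y z a b : T) (p s : seq T).

Definition gdist (u v : T) (k : nat) : Prop :=
  (exists p : seq T, path e u p /\ last u p = v /\ size p = k) /\
  (forall p : seq T, path e u p -> last u p = v -> k <= size p).

Definition gdet (u v : T) (k : nat) : Prop :=
  (exists p : seq T,
      path e u p /\ uniq (u :: p) /\ last u p = v /\ size p = k) /\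
  (forall p : seq T,
      path e u p -> uniq (u :: p) -> last u p = v -> size p <= k).

Lemma e_irr x : e x x = false. Proof. by rewrite eE eqxx. Qed.

Lemma e_sym x y : e x y = e y x.
Proof.
rewrite !eE eq_sym; congr andb.
by case: (x == c); case: (y == c); case: (P x); case: (P y).
Qed.

Lemma eQ {x y} : ~~ P y -> e x y -> x = c.
Proof.
move=> Py; rewrite eE => /andP[_ /or3P[/eqP //|/eqP Hy|/andP[_ Hy]]].
  by rewrite Hy Pc in Py.
by rewrite Hy in Py.
Qed.

Lemma ne_c {x} : ~~ P x -> x != c.
Proof. by move=> Px; apply/eqP => Hx; rewrite Hx Pc in Px. Qed.

Lemma last_ne {u p} : uniq (u :: p) -> last u p = u -> p = [::].
Proof.
case: p => // x p /= /andP[H _] Hl.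
by have := mem_last x p; rewrite Hl => Hu; rewrite Hu in H.
Qed.

Lemma gdist_uniq u v k k' : gdist u v k -> gdist u v k' -> k = k'.
Proof.
move=> [[p [Hp [Hl Hs]]] H1] [[p' [Hp' [Hl' Hs']]] H2].
have := H1 p' Hp' Hl'; have := H2 p Hp Hl; lia.
Qed.

Lemma gdet_uniq u v k k' : gdet u v k -> gdet u v k' -> k = k'.
Proof.
move=> [[p [Hp [Hu [Hl Hs]]]] H1] [[p' [Hp' [Hu' [Hl' Hs']]]] H2].
have := H1 p' Hp' Hu' Hl'; have := H2 p Hp Hu Hl; lia.
Qed.

Definition dd u v := if v == u then 0 else if e u v then 1 else 2.

Lemma gdist_dd u v : gdist u v (dd u v).
Proof.
rewrite /dd; have [->|neq] := eqVneq v u.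
  by split; [exists [::] | ].
case: ifP => huv.
  split; first by exists [:: v]; rewrite /= huv.
  move=> [|x p] //= _ Hl; by [rewrite Hl eqxx in neq |].
have uc : u != c.
  apply/eqP => Huc; move: huv; rewrite eE Huc eqxx /=.
  by rewrite eq_sym -Huc neq.
have vc : v != c.
  apply/eqP => Hvc; move: huv; rewrite eE Hvc eqxx orbT andbT.
  by rewrite eq_sym -Hvc neq.
split.
  exists [:: c; v]; rewrite /= !eE uc eqxx orbT /= [c == v]eq_sym vc /=; split => //.
move=> [|x [|y p]] //=.
- by move=> _ Hl; rewrite Hl eqxx in neq.
- by rewrite andbT => Hx Hl; rewrite Hl huv in Hx.
Qed.

Lemma interior {x y p} : path e x (y :: p) -> uniq [:: x, y & p] ->
  all P (belast y p).
Proof.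
elim: p x y => [|z p IH] x y //=.
move=> /andP[exy /andP[eyz pz]] /andP[nx /andP[ny uz]].
apply/andP; split.
  apply/negPn/negP => Py.
  have hx := eQ Py exy. rewrite e_sym in eyz. have hz := eQ Py eyz.
  by move: nx; rewrite hx -hz !inE eqxx !orbT.
apply: (IH y z); first by rewrite /= eyz.
by rewrite /= ny.
Qed.

Lemma small {s} : uniq s -> all P s -> size s <= N.
Proof.
move=> us /allP As; rewrite -cardP cardE.
by apply: uniq_leq_size => // x /As; rewrite mem_enum.
Qed.

Lemma memd y p x : x \in y :: p -> x = last y p \/ x \in belast y p.
Proof.
by rewrite lastI mem_rcons inE => /orP[/eqP|]; [left|right].
Qed.

Lemma ub_PP {u p} : path e u p -> uniq (u :: p) -> P u -> P (last u p) ->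
  size p < N.
Proof.
case: p => [|y p] Hp Hu Pu Pl; first by rewrite /=; lia.
have Ai := interior Hp Hu.
suff H : all P (y :: p) by apply: (small Hu); exact/andP.
apply/allP => x /memd [->//|]; exact: (allP Ai).
Qed.

Lemma ub_PQ {u p} : path e u p -> uniq (u :: p) -> P u -> size p <= N.
Proof.
case: p => [|y p] Hp Hu Pu; first by rewrite /=; lia.
have Ai := interior Hp Hu.
have := small (s := u :: belast y p); rewrite /= size_belast; apply => /=.
  move: Hu; rewrite lastI /= rcons_uniq mem_rcons inE negb_or.
  by case/andP => /andP[_ ->] /andP[_ ->].
by rewrite Pu.
Qed.

Lemma ub_QP {u p} : path e u p -> uniq (u :: p) -> P (last u p) -> size p <= N.
Proof.
case: p => [|y p] Hp Hu Pl; first by rewrite /=; lia.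
have Ai := interior Hp Hu.
apply: small; first by case/andP: Hu.
apply/allP => x /memd [->//|]; exact: (allP Ai).
Qed.

Lemma ub_cQ {u p} : path e u p -> uniq (u :: p) -> ~~ P (last u p) -> u = c ->
  size p <= 1.
Proof.
case: p => [|y p] Hp Hu Pl uc //.
move: Hp Hu Pl; rewrite lastI -rcons_cons rcons_path rcons_uniq size_rcons.
rewrite last_rcons => /andP[_ He] /andP[_ Hu] Pl.
have := eQ Pl He; rewrite -uc => /(last_ne Hu) ->.
by [].
Qed.

Lemma ub_Qc {u p} : path e u p -> uniq (u :: p) -> ~~ P u -> last u p = c ->
  size p <= 1.
Proof.
case: p => [|y p] //= /andP[He Hp] /andP[_ Hu] Pu Hl.
rewrite e_sym in He; have yc := eQ Pu He.
have := last_ne Hu; rewrite Hl yc => -> //.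
Qed.

Lemma ub_QQ {u p} : path e u p -> uniq (u :: p) -> ~~ P u -> ~~ P (last u p) ->
  size p <= 2.
Proof.
case: p => [|y p] //= /andP[He Hp] /andP[_ Hu] Pu Hl.
rewrite e_sym in He; have yc := eQ Pu He.
have := ub_cQ Hp Hu Hl yc; lia.
Qed.

Definition L a b := enum [pred x | P x && (x != a) && (x != b)].

Lemma clique_path x s : P x -> all P s -> uniq (x :: s) -> path e x s.
Proof.
elim: s x => //= y s IH x Px /andP[Py As] /andP[nx us].
apply/andP; split.
  rewrite eE Px Py !orbT andbT; move: nx; rewrite inE negb_or.
  by case/andP.
by apply: IH.
Qed.

Lemma L_props {a b} : P a -> P b -> a != b ->
  [/\ size (L a b) = N - 2, all P (L a b), uniq (L a b),
      a \notin L a b & b \notin L a b].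
Proof.
move=> Pa Pb ab; rewrite /L; split.
- rewrite -cardE.
  have h1 := cardD1 a P; have h2 := cardD1 b [predD1 P & a].
  have Pa' : a \in P := Pa.
  have Pb' : b \in [predD1 P & a] by rewrite inE /= eq_sym ab; exact: Pb.
  rewrite cardP Pa' in h1; rewrite Pb' in h2.
  have -> : #|[pred x | P x && (x != a) && (x != b)]| =
            #|[predD1 [predD1 P & a] & b]|.
    by apply: eq_card => x; rewrite !inE /=; rewrite [x \in P]/(_ \in _) /=; case: (P x); case: (x == a); case: (x == b).
  by rewrite h1 h2 !add1n !subSS subn0.
- by apply/allP => x; rewrite mem_enum inE => /andP[/andP[]].
- exact: enum_uniq.
- by rewrite mem_enum inE eqxx andbF.
- by rewrite mem_enum inE eqxx andbF.
Qed.

Lemma det_self u : gdet u u 0.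
Proof.
split; first by exists [::].
by move=> p _ Hu Hl; rewrite (last_ne Hu Hl).
Qed.

Lemma det_PP u v : P u -> P v -> u != v -> gdet u v N.-1.
Proof.
move=> Pu Pv uv; have [s1 s2 s3 s4 s5] := L_props Pu Pv uv.
have Hu : uniq (u :: rcons (L u v) v).
  by rewrite /= rcons_uniq mem_rcons inE negb_or uv s4 s5 s3.
split.
  exists (rcons (L u v) v); split; last split => //.
    apply: clique_path => //; apply/allP => x; rewrite mem_rcons inE.
    by case/orP => [/eqP->//|]; apply/allP.
  by rewrite last_rcons size_rcons s1; split => //; lia.
move=> p Hp Hu' Hl; have := ub_PP Hp Hu' Pu; rewrite Hl => /(_ Pv); lia.
Qed.

Lemma det_cQ v : ~~ P v -> gdet c v 1.
Proof.
move=> Pv; split.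
  exists [:: v]; rewrite /= andbT eE eqxx /= inE.
  by rewrite eq_sym (ne_c Pv).
move=> p Hp Hu Hl; apply: ub_cQ Hp Hu _ _ => //; by rewrite Hl.
Qed.

Lemma det_PQ u v : P u -> u != c -> ~~ P v -> gdet u v N.
Proof.
move=> Pu uc Pv; have [s1 s2 s3 s4 s5] := L_props Pu Pc uc.
have A : all P (u :: rcons (L u c) c) by rewrite /= Pu all_rcons Pc s2.
have nv : v \notin u :: rcons (L u c) c.
  by apply/negP => /(allP A) Pv'; rewrite Pv' in Pv.
have U1 : uniq (u :: rcons (L u c) c).
  by rewrite /= rcons_uniq mem_rcons inE negb_or uc s4 s5 s3.
split.
  exists (rcons (rcons (L u c) c) v); split; last split.
  - rewrite rcons_path last_rcons; apply/andP; split.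
      by apply: clique_path => //; case/andP: A.
    by rewrite eE eqxx /= eq_sym (ne_c Pv).
  - by rewrite -rcons_cons rcons_uniq nv U1.
  - by rewrite last_rcons !size_rcons s1; split => //; lia.
by move=> p Hp Hu _; apply: ub_PQ Hp Hu Pu.
Qed.

Lemma det_QP u v : ~~ P u -> P v -> v != c -> gdet u v N.
Proof.
move=> Pu Pv vc; rewrite eq_sym in vc.
have [s1 s2 s3 s4 s5] := L_props Pc Pv vc.
have A : all P (c :: rcons (L c v) v) by rewrite /= Pc all_rcons Pv s2.
have nu : u \notin c :: rcons (L c v) v.
  by apply/negP => /(allP A) Pu'; rewrite Pu' in Pu.
have U1 : uniq (c :: rcons (L c v) v).
  by rewrite /= rcons_uniq mem_rcons inE negb_or vc s4 s5 s3.
split.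
  exists (c :: rcons (L c v) v); split; last split.
  - rewrite /=; apply/andP; split.
      by rewrite eE eqxx orbT andbT (ne_c Pu).
    by apply: clique_path => //; case/andP: A.
  - by rewrite /= nu.
  - by rewrite /= last_rcons size_rcons s1; split => //; lia.
move=> p Hp Hu Hl; apply: ub_QP Hp Hu _; by rewrite Hl.
Qed.

Lemma det_Qc u : ~~ P u -> gdet u c 1.
Proof.
move=> Pu; split.
  exists [:: c]; rewrite /= andbT eE eqxx orbT andbT (ne_c Pu) inE.
  by rewrite (ne_c Pu).
move=> p Hp Hu Hl; exact: ub_Qc Hp Hu Pu Hl.
Qed.

Lemma det_QQ u v : ~~ P u -> ~~ P v -> u != v -> gdet u v 2.
Proof.
move=> Pu Pv uv; split.
  exists [:: c; v]; rewrite /= andbT !eE eqxx orbT andbT (ne_c Pu) /=.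
  rewrite eq_sym (ne_c Pv) /= !inE negb_or (ne_c Pu) uv /= andbT.
  by rewrite eq_sym (ne_c Pv).
move=> p Hp Hu Hl; apply: ub_QQ Hp Hu Pu _; by rewrite Hl.
Qed.

Definition dD u v :=
  if v == u then 0 else
  if P u then (if P v then N.-1 else if u == c then 1 else N)
  else (if v == c then 1 else if P v then N else 2).

Lemma gdet_dD u v : gdet u v (dD u v).
Proof.
rewrite /dD; have [->|neq] := eqVneq v u; first exact: det_self.
rewrite eq_sym in neq.
case: ifP => Pu.
  case: ifP => Pv; first exact: det_PP.
  case: eqP => [->|/eqP uc]; first by apply: det_cQ; rewrite Pv.
  by apply: det_PQ => //; rewrite Pv.
case: eqP => [->|/eqP vc]; first by apply: det_Qc; rewrite Pu.
case: ifP => Pv; first by apply: det_QP => //; rewrite Pu.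
by apply: det_QQ => //; rewrite ?Pu ?Pv.
Qed.

Lemma card_det u k :
  #|[set v | `[< gdet u v k >]]| = #|[pred v | dD u v == k]|.
Proof.
apply: eq_card => v; rewrite inE; apply/asboolP/eqP => [H|<-].
  exact: gdet_uniq (gdet_dD u v) H.
exact: gdet_dD.
Qed.

Lemma card_dist u k :
  #|[set v | `[< gdist u v k >]]| = #|[pred v | dd u v == k]|.
Proof.
apply: eq_card => v; rewrite inE; apply/asboolP/eqP => [H|<-].
  exact: gdist_uniq (gdist_dd u v) H.
exact: gdist_dd.
Qed.

Lemma c1 u : #|[pred v | v == u]| = 1.
Proof. by rewrite -(card1 u); apply: eq_card => v; rewrite !inE. Qed.

Lemma cQ : #|[pred v | ~~ P v]| = N.
Proof.
have := cardC P; rewrite cardP cardT => h.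
have -> : #|[pred v | ~~ P v]| = #|[predC P]| by apply: eq_card.
lia.
Qed.

Lemma cQ1 {u} : ~~ P u -> #|[pred v | ~~ P v && (v != u)]| = N - 1.
Proof.
move=> Pu; have := cardD1 u [pred v | ~~ P v]; rewrite cQ inE /= Pu /=.
have -> : #|[pred v | ~~ P v && (v != u)]| = #|[predD1 [pred v | ~~ P v] & u]|.
  by apply: eq_card => v; rewrite !inE /= andbC.
by move=> ->; rewrite add1n subn1.
Qed.

Lemma cP1 {u} : P u -> #|[pred v | P v && (v != u)]| = N - 1.
Proof.
move=> Pu; have := cardD1 u P; rewrite cardP.
have -> : u \in P = true by [].
have -> : #|[pred v | P v && (v != u)]| = #|[predD1 P & u]|.
  by apply: eq_card => v; rewrite !inE /= andbC.
by move=> /= ->; rewrite add1n subn1.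
Qed.

Lemma cT1 u : #|[pred v | v != u]| = N + N - 1.
Proof.
have := cardC1 u; rewrite cardT subn1 => <-.
by apply: eq_card.
Qed.

Lemma cT2 {u} : u != c -> #|[pred v | (v != u) && (v != c)]| = N + N - 2.
Proof.
move=> uc; have := cardD1 c [pred v | v != u]; rewrite cT1 inE /= eq_sym uc /=.
have -> : #|[pred v | (v != u) && (v != c)]| = #|[predD1 [pred v | v != u] & c]|.
  by apply: eq_card => v; rewrite !inE /= andbC.
move=> h; have -> : N + N - 2 = (N + N - 1) - 1 by lia.
by rewrite h add1n subn1.
Qed.

Lemma ex_Q u : exists v, ~~ P v && (v != u).
Proof.
apply/existsP; rewrite -[X in is_true X]negbK; apply/negP => /existsPn H.
have := cardD1 u [pred v | ~~ P v]; rewrite cQ.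
have -> : #|[predD1 [pred v | ~~ P v] & u]| = 0.
  by apply: eq_card0 => v; rewrite !inE /= andbC; apply/negbTE.
case: (u \in _); rewrite /=; lia.
Qed.

Lemma ex_P u : exists v, P v && (v != u).
Proof.
apply/existsP; rewrite -[X in is_true X]negbK; apply/negP => /existsPn H.
have := cardD1 u P; rewrite cardP.
have -> : #|[predD1 P & u]| = 0.
  by apply: eq_card0 => v; rewrite !inE /= andbC; apply/negbTE; exact: H.
case: (u \in _); rewrite /=; lia.
Qed.

Definition gdds u (sq : seq nat) := exists E,
  ((forall v, exists k, gdist u v k /\ k <= E) /\ (exists v, gdist u v E)) /\
  sq = [seq #|[set v | `[< gdist u v k >]]| | k <- iota 0 E.+1].
Definition gddsD u (sq : seq nat) := exists E,
  ((forall v, exists k, gdet u v k /\ k <= E) /\ (exists v, gdet u v E)) /\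
  sq = [seq #|[set v | `[< gdet u v k >]]| | k <- iota 0 E.+1].

Lemma dds_c : gdds c [:: 1; N + N - 1].
Proof.
exists 1; split; first split.
- move=> v; exists (dd c v); split; first exact: gdist_dd.
  by rewrite /dd; case: ifP => // /negbT vc; rewrite eE eq_sym vc eqxx.
- have [v /andP[Pv vc]] := ex_Q c; exists v.
  have := gdist_dd c v; rewrite /dd (negbTE vc) eE eqxx /= eq_sym vc //.
rewrite /= !card_dist; congr [:: _; _].
  rewrite -(c1 c); apply: eq_card => v; rewrite !inE /dd.
  by case: (v == c) => //=; case: (e c v).
rewrite -(cT1 c); apply: eq_card => v; rewrite !inE /dd.
by case: (v =P c) => //= /eqP vc; rewrite eE [c == v]eq_sym vc eqxx.
Qed.

Lemma eP u v : P u -> u != c -> e u v = (v != u) && P v.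
Proof.
move=> Pu uc; rewrite eE (negbTE uc) Pu [u == v]eq_sym /=.
by case: (v =P c) => [->|]; rewrite ?Pc.
Qed.

Lemma eQv u v : ~~ P u -> e u v = (v == c).
Proof.
move=> Pu; rewrite eE (negbTE (ne_c Pu)) (negbTE Pu) /= orbF.
by case: (v =P c) => [->|]; rewrite ?andbF ?andbT // (ne_c Pu).
Qed.

Lemma dds_P u : P u -> u != c -> gdds u [:: 1; N - 1; N].
Proof.
move=> Pu uc; exists 2; split; first split.
- move=> v; exists (dd u v); split; first exact: gdist_dd.
  by rewrite /dd; case: ifP => //; case: ifP.
- have [v /andP[Pv vu]] := ex_Q u; exists v.
  have := gdist_dd u v; rewrite /dd (negbTE vu) eP // (negbTE Pv) andbF //.
rewrite /= !card_dist; congr [:: _; _; _].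
- rewrite -[X in X = _](c1 u); apply: eq_card => v; rewrite !inE /dd.
  by case: (v == u) => //=; case: (e u v).
- rewrite -[X in X = _](cP1 Pu); apply: eq_card => v; rewrite !inE /dd eP //.
  by case: (v == u) => //=; case: (P v).
- rewrite -[X in X = _]cQ; apply: eq_card => v; rewrite !inE /dd eP //.
  case: (v =P u) => [->|] /=; first by rewrite Pu.
  by case: (P v).
Qed.

Lemma dds_Q u : ~~ P u -> gdds u [:: 1; 1; N + N - 2].
Proof.
move=> Pu; exists 2; split; first split.
- move=> v; exists (dd u v); split; first exact: gdist_dd.
  by rewrite /dd; case: ifP => //; case: ifP.
- have [v /andP[Pv vu]] := ex_Q u; exists v.
  have := gdist_dd u v; rewrite /dd (negbTE vu) eQv // (negbTE (ne_c Pv)) //.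
rewrite /= !card_dist; congr [:: _; _; _].
- rewrite -[X in X = _](c1 u); apply: eq_card => v; rewrite !inE /dd.
  by case: (v == u) => //=; case: (e u v).
- rewrite -[X in X = _](c1 c); apply: eq_card => v; rewrite !inE /dd eQv //.
  case: (v =P u) => [->|] /=; first by rewrite (negbTE (ne_c Pu)).
  by case: (v == c).
- rewrite -(cT2 (ne_c Pu)); apply: eq_card => v; rewrite !inE /dd eQv //.
  by case: (v == u) => //=; case: (v == c).
Qed.

Lemma ddsD_c : gddsD c (1 :: N :: nseq (N - 3) 0 ++ [:: N - 1]).
Proof.
have dc v : dD c v = if v == c then 0 else if P v then N.-1 else 1.
  by rewrite /dD Pc eqxx; case: (v == c) => //; case: (P v).
exists N.-1; split; first split.
- move=> v; exists (dD c v); split; first exact: gdet_dD.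
  rewrite dc; case: (v == c) => //; case: (P v) => //; lia.
- have [v /andP[Pv vc]] := ex_P c; exists v.
  by have := gdet_dD c v; rewrite dc (negbTE vc) Pv.
rewrite prednK; last lia.
rewrite (iota_c (ltnW N4)) map_cat /=.
rewrite (@map_zero _ 2 (N - 3)); last first.
  move=> k h1 h2; rewrite card_det; apply: eq_card0 => v; rewrite !inE dc.
  case: (v == c); first lia.
  case: (P v); lia.
rewrite !card_det; congr (_ :: _ :: _ ++ [:: _]).
- rewrite -[X in X = _](c1 c); apply: eq_card => v; rewrite !inE dc.
  by case: (v == c) => //=; case: (P v) => //; lia.
- rewrite -[X in X = _]cQ; apply: eq_card => v; rewrite !inE dc.
  case: (v =P c) => [->|] /=; first by rewrite Pc.
  case: (P v) => //=; lia.
- rewrite -[X in X = _](cP1 Pc); apply: eq_card => v; rewrite !inE dc.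
  case: (v =P c) => [->|] /=; first lia.
  case: (P v) => //=; lia.
Qed.

Lemma ddsD_P u : P u -> u != c ->
  gddsD u (1 :: nseq (N - 2) 0 ++ [:: N - 1; N]).
Proof.
move=> Pu uc.
have du v : dD u v = if v == u then 0 else if P v then N.-1 else N.
  by rewrite /dD Pu (negbTE uc).
exists N; split; first split.
- move=> v; exists (dD u v); split; first exact: gdet_dD.
  rewrite du; case: (v == u) => //; case: (P v) => //; lia.
- have [v /andP[Pv vu]] := ex_Q u; exists v.
  by have := gdet_dD u v; rewrite du (negbTE vu) (negbTE Pv).
rewrite (iota_P (ltnW N4)) /= map_cat /=.
rewrite (@map_zero _ 1 (N - 2)); last first.
  move=> k h1 h2; rewrite card_det; apply: eq_card0 => v; rewrite !inE du.
  case: (v == u); first lia.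
  case: (P v); lia.
rewrite !card_det; congr (_ :: _ ++ [:: _; _]).
- rewrite -[X in X = _](c1 u); apply: eq_card => v; rewrite !inE du.
  by case: (v == u) => //=; case: (P v) => //; lia.
- rewrite -[X in X = _](cP1 Pu); apply: eq_card => v; rewrite !inE du.
  case: (v =P u) => [->|] /=; first lia.
  case: (P v) => //=; lia.
- rewrite -[X in X = _]cQ; apply: eq_card => v; rewrite !inE du.
  case: (v =P u) => [->|] /=; first by rewrite Pu; lia.
  case: (P v) => //=; lia.
Qed.

Lemma ddsD_Q u : ~~ P u ->
  gddsD u ([:: 1; 1; N - 1] ++ nseq (N - 3) 0 ++ [:: N - 1]).
Proof.
move=> Pu; have uc := ne_c Pu.
have du v : dD u v =
    if v == u then 0 else if v == c then 1 else if P v then N else 2.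
  by rewrite /dD (negbTE Pu).
exists N; split; first split.
- move=> v; exists (dD u v); split; first exact: gdet_dD.
  rewrite du; case: (v == u) => //; case: (v == c) => //; case: (P v) => //; lia.
- have [v /andP[Pv vc]] := ex_P c; exists v.
  have := gdet_dD u v; rewrite du (negbTE vc) Pv.
  case: (v =P u) => // vu; by move: Pu; rewrite -vu Pv.
rewrite (iota_Q (ltnW N4)) !map_cat /=.
rewrite (@map_zero _ 3 (N - 3)); last first.
  move=> k h1 h2; rewrite card_det; apply: eq_card0 => v; rewrite !inE du.
  case: (v == u); first lia.
  case: (v == c); first lia.
  case: (P v); lia.
rewrite !card_det; congr (_ :: _ :: _ :: _ ++ [:: _]).
- rewrite -[X in X = _](c1 u); apply: eq_card => v; rewrite !inE du.
  by case: (v == u) => //=; case: (v == c) => //; case: (P v) => //; lia.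
- rewrite -[X in X = _](c1 c); apply: eq_card => v; rewrite !inE du.
  case: (v =P u) => [->|] /=; first by rewrite (negbTE uc).
  by case: (v == c) => //; case: (P v) => //; lia.
- rewrite -[X in X = _](cQ1 Pu); apply: eq_card => v; rewrite !inE du.
  case: (v =P u) => [->|] /=; first by rewrite andbF.
  case: (v =P c) => [->|] /=; first by rewrite Pc.
  case: (P v) => //=; lia.
- rewrite -[X in X = _](cP1 Pc); apply: eq_card => v; rewrite !inE du.
  case: (v =P u) => [->|] /=; first by rewrite (negbTE Pu); lia.
  case: (v =P c) => [->|] /=; first lia.
  case: (P v) => //=; lia.
Qed.

End Graph.

Lemma cardP_ord n N : N <= 2 ^ n -> #|[pred x : 'I_(2 ^ n) | val x < N]| = N.
Proof.
move=> hN.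
have inj : injective (fun i : 'I_N => widen_ord hN i).
  by move=> i j /(congr1 val) /= /val_inj.
transitivity #|[set widen_ord hN i | i in [set: 'I_N]]|.
  apply: eq_card => x; rewrite inE /=; apply/idP/imsetP.
    move=> hx; exists (Ordinal hx); first by rewrite inE.
    by apply: val_inj.
  by case=> i _ ->; exact: (ltn_ord i).
by rewrite (card_imset _ inj) cardsT card_ord.
Qed.

Theorem mainTheorem11 (n : nat) (hn : 3 <= n) :
  let N := 2 ^ n.-1 in
  forall u : 'I_(2 ^ n),
    (val u = 0 ->
       dds_is n u [:: 1; 2 ^ n - 1] /\
       ddsD_is n u (1 :: N :: nseq (N - 3) 0 ++ [:: N - 1])) /\
    (0 < val u < N ->
       dds_is n u [:: 1; N - 1; N] /\
       ddsD_is n u (1 :: nseq (N - 2) 0 ++ [:: N - 1; N])) /\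
    (N <= val u ->
       dds_is n u [:: 1; 1; 2 ^ n - 2] /\
       ddsD_is n u ([:: 1; 1; N - 1] ++ nseq (N - 3) 0 ++ [:: N - 1])).
Proof.
move=> N u.
have [m4 mh] := gm_facts hn.
have hN : N <= 2 ^ n by rewrite (g2 hn); rewrite /N /gm; lia.
pose P := [pred x : 'I_(2 ^ n) | val x < N].
have h0 : 0 < 2 ^ n by rewrite expn_gt0.
pose c : 'I_(2 ^ n) := Ordinal h0.
have Pc : P c by rewrite /P /= /N; rewrite /gm in m4; lia.
have eE : forall x y, padj n x y = (x != y) && [|| x == c, y == c | P x && P y].
  by move=> x y; rewrite (padjE n hn) -!val_eqE.
have cardP : #|P| = N by apply: cardP_ord.
have cardT : #|'I_(2 ^ n)| = N + N by rewrite card_ord (g2 hn).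
have N4 : 4 <= N by [].
have e2 : 2 ^ n = N + N by rewrite (g2 hn).
split; last split.
- move=> u0; have -> : u = c by apply: val_inj.
  rewrite e2; split.
    exact: (@dds_c _ P c (padj n) N Pc eE cardP cardT N4).
  exact: (@ddsD_c _ P c (padj n) N Pc eE cardP cardT N4).
- case/andP => hu1 hu2.
  have Pu : P u by [].
  have uc : u != c by rewrite -val_eqE /= -lt0n.
  split.
    exact: (@dds_P _ P c (padj n) N Pc eE cardP cardT N4 u Pu uc).
  exact: (@ddsD_P _ P c (padj n) N Pc eE cardP cardT N4 u Pu uc).
- move=> hu.
  have Pu : ~~ P u by rewrite /P /= -leqNgt.
  rewrite e2; split.
    exact: (@dds_Q _ P c (padj n) N Pc eE cardP cardT N4 u Pu).
  exact: (@ddsD_Q _ P c (padj n) N Pc eE cardP cardT N4 u Pu).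
Qed.
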